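(* Let $V$ be a finite nonempty set of voters, $A$ a finite set of alternatives, $A=B\uplus C$ a partition, and $G:\mathcal{P}(V,B)\to B$, $H:\mathcal{P}(V,C)\to C$ social choice functions. Let $F:\mathcal{P}(V,A)\to S_2(A)$ be the consular election rule $F(P)=\{G(P|_B),H(P|_C)\}$. Then $F$ satisfies SPP and SPO if and only if $G$ and $H$ are strategy-proof.
   Context: A profile over a set $X$ of alternatives assigns to each voter $i\in V$ a linear order on $X$; $\mathcal{P}(V,X)$ is the set of profiles; $P|_B$ is the profile of restrictions to $B$; $P_i'P_{-i}$ replaces voter $i$'s order by $P_i'$. A social choice function $G:\mathcal{P}(V,B)\to B$ is strategy-proof if for every profile $Q$, voter $i$ and linear order $Q_i'$ on $B$, $G(Q)\succeq_i G(Q_i'Q_{-i})$ in the order $Q_i$. $S_2(A)$ is the set of 2-element subsets of $A$. For a consular election rule $F:\mathcal{P}(V,A)\to S_2(A)$: SPO means that for all $P$, $i$, $P_i'$, $\mathrm{best}(P_i,F(P))\succeq_i\mathrm{best}(P_i,F(P_i'P_{-i}))$; SPP means the same with $\mathrm{worst}$, where $\mathrm{best}(P_i,W)$, $\mathrm{worst}(P_i,W)$ are the $P_i$-best and $P_i$-worst elements of $W$. *)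

(* Defs.v *)
From mathcomp Require Import all_boot.
Set Implicit Arguments. Unset Strict Implicit. Unset Printing Implicit Defensive.

(* A linear order on X, given by its weak relation [pref x y] = "x is weakly
   preferred to y" (x ⪰ y): reflexive, antisymmetric, transitive, total. *)
Record lorder (X : finType) := LOrder {
  pref : rel X;
  pref_refl : reflexive pref;
  pref_anti : antisymmetric pref;
  pref_trans : transitive pref;
  pref_total : total pref }.

Definition profile (V X : finType) := V -> lorder X.

Definition upd (V X : finType) (P : profile V X) (i : V) (Pi' : lorder X)
  : profile V X := fun j => if j == i then Pi' else P j.

Definition sub (A : finType) (B : {set A}) : finType := {x : A | x \in B}.

Section Restrict.
Variables (A : finType) (B : {set A}) (r : lorder A).
Definition rpref : rel (sub B) := fun x y => pref r (val x) (val y).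
Lemma rpref_refl : reflexive rpref. Proof. by move=> x; apply: pref_refl. Qed.
Lemma rpref_anti : antisymmetric rpref.
Proof. by move=> x y H; apply: val_inj; exact: pref_anti H. Qed.
Lemma rpref_trans : transitive rpref.
Proof. by move=> x y z; apply: pref_trans. Qed.
Lemma rpref_total : total rpref. Proof. by move=> x y; apply: pref_total. Qed.
Definition restrict : lorder (sub B) :=
  LOrder rpref_refl rpref_anti rpref_trans rpref_total.
End Restrict.

Definition restrict_prof (V A : finType) (P : profile V A) (B : {set A})
  : profile V (sub B) := fun i => restrict B (P i).

Definition strategy_proof (V X : finType) (G : profile V X -> X) : Prop :=
  forall (Q : profile V X) (i : V) (Qi' : lorder X),
    pref (Q i) (G Q) (G (upd Q i Qi')).

Definition is_best (X : finType) (r : lorder X) (W : {set X}) (x : X) : Prop :=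
  x \in W /\ forall y, y \in W -> pref r x y.
Definition is_worst (X : finType) (r : lorder X) (W : {set X}) (x : X) : Prop :=
  x \in W /\ forall y, y \in W -> pref r y x.

Definition S2 (A : finType) (W : {set A}) : Prop := #|W| = 2.

Definition SPO (V A : finType) (F : profile V A -> {set A}) : Prop :=
  forall (P : profile V A) (i : V) (Pi' : lorder A) (b b' : A),
    is_best (P i) (F P) b -> is_best (P i) (F (upd P i Pi')) b' ->
    pref (P i) b b'.
Definition SPP (V A : finType) (F : profile V A -> {set A}) : Prop :=
  forall (P : profile V A) (i : V) (Pi' : lorder A) (w w' : A),
    is_worst (P i) (F P) w -> is_worst (P i) (F (upd P i Pi')) w' ->
    pref (P i) w w'.

Definition consular (V A : finType) (B C : {set A})
  (G : profile V (sub B) -> sub B) (H : profile V (sub C) -> sub C)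
  (P : profile V A) : {set A} :=
  [set val (G (restrict_prof P B)); val (H (restrict_prof P C))].

(* Main.v *)
Require Import Defs.
From mathcomp Require Import all_boot.
From Stdlib Require Import FunctionalExtensionality ProofIrrelevance.

Set Implicit Arguments. Unset Strict Implicit.

Section Ext.
Variables (A : finType) (B : {set A}) (Q : lorder (sub B)).

Definition r0 : rel A := fun x y => (enum_rank x <= enum_rank y)%N.

Definition extp : rel A := fun x y =>
  match (insub x : option (sub B)), (insub y : option (sub B)) with
  | Some a, Some b => pref Q a b
  | Some _, None => true
  | None, Some _ => false
  | None, None => r0 x y
  end.

Lemma extp_refl : reflexive extp.
Proof. move=> x; rewrite /extp; case: insubP => [a _ _|_]; [exact: pref_refl|exact: leqnn]. Qed.

Lemma extp_anti : antisymmetric extp.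
Proof.
move=> x y; rewrite /extp.
case: insubP => [a _ ea|nx]; case: insubP => [b _ eb|ny] //.
- by move=> /(@pref_anti _ Q a b) ab; rewrite -ea -eb ab.
- move=> /andP[h1 h2]; apply: enum_rank_inj; apply: ord_inj; apply/eqP.
  by rewrite eqn_leq; apply/andP; split.
Qed.

Lemma extp_trans : transitive extp.
Proof.
move=> y x z; rewrite /extp.
case: insubP => [a _ _|_]; case: insubP => [b _ _|_]; case: insubP => [c _ _|_] //.
- exact: pref_trans.
- exact: leq_trans.
Qed.

Lemma extp_total : total extp.
Proof.
move=> x y; rewrite /extp.
case: insubP => [a _ _|_]; case: insubP => [b _ _|_] //.
- exact: pref_total.
- exact: leq_total.
Qed.

Definition ext : lorder A := LOrder extp_refl extp_anti extp_trans extp_total.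

Lemma ext_val (a b : sub B) : pref ext (val a) (val b) = pref Q a b.
Proof. by rewrite /= /extp !valK. Qed.

Lemma ext_top x y : x \in B -> y \notin B -> pref ext x y.
Proof.
move=> hx hy; rewrite /= /extp.
case: insubP => [a _ _|]; last by rewrite hx.
by case: insubP => [b hb _|_] //; rewrite hb in hy.
Qed.
End Ext.

Lemma lorder_eq (X : finType) (r s : lorder X) : pref r = pref s -> r = s.
Proof.
case: r => p1 a1 b1 c1 d1; case: s => p2 a2 b2 c2 d2 /= e; subst.
f_equal; apply: proof_irrelevance.
Qed.

Lemma restrict_ext (A : finType) (B : {set A}) (Q : lorder (sub B)) :
  restrict B (ext Q) = Q.
Proof.
apply: lorder_eq; apply: functional_extensionality => x;
apply: functional_extensionality => y.
exact: ext_val.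
Qed.

Lemma restrict_upd (V A : finType) (P : profile V A) i Pi' (B : {set A}) :
  restrict_prof (upd P i Pi') B = upd (restrict_prof P B) i (restrict B Pi').
Proof.
apply: functional_extensionality => j; rewrite /restrict_prof /upd.
by case: (j == i).
Qed.

Lemma spG (V A : finType) (B : {set A}) (G : profile V (sub B) -> sub B) :
  strategy_proof G -> forall (P : profile V A) i Pi',
  pref (P i) (val (G (restrict_prof P B))) (val (G (restrict_prof (upd P i Pi') B))).
Proof.
move=> sp P i Pi'; rewrite restrict_upd.
exact: (sp (restrict_prof P B) i (restrict B Pi')).
Qed.

Lemma fwd (V A : finType) (B : {set A}) (G : profile V (sub B) -> sub B)
  (K : profile V A -> A) : (forall P, K P \notin B) ->
  SPO (fun P => [set val (G (restrict_prof P B)); K P]) -> strategy_proof G.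
Proof.
move=> HK spo Q i Qi'.
pose P : profile V A := fun j => ext (Q j).
have eP : restrict_prof P B = Q.
  by apply: functional_extensionality => j; exact: restrict_ext.
have eP' : restrict_prof (upd P i (ext Qi')) B = upd Q i Qi'.
  by rewrite restrict_upd eP restrict_ext.
have := spo P i (ext Qi') (val (G Q)) (val (G (upd Q i Qi'))).
rewrite eP eP' /P ext_val; apply.
- split; first by rewrite in_set2 eqxx ?orbT.
  move=> y; rewrite in_set2 => /orP[/eqP->|/eqP->]; first exact: pref_refl.
  by apply: ext_top; [exact: valP|exact: HK].
- split; first by rewrite in_set2 eqxx ?orbT.
  move=> y; rewrite in_set2 => /orP[/eqP->|/eqP->]; first exact: pref_refl.
  by apply: ext_top; [exact: valP|exact: HK].
Qed.

Theorem proposition21 (V A : finType) (B C : {set A})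
  (G : profile V (sub B) -> sub B) (H : profile V (sub C) -> sub C) :
  0 < #|V| ->
  [disjoint B & C] -> B :|: C = [set: A] ->
  (SPP (consular G H) /\ SPO (consular G H)) <->
  (strategy_proof G /\ strategy_proof H).
Proof.
move=> _ dis _.
have nB : forall c, c \in C -> c \notin B.
  by move=> c hc; apply/negP => hb; rewrite (disjointFr dis hb) in hc.
have nC : forall b, b \in B -> b \notin C.
  by move=> b hb; rewrite (disjointFr dis hb).
split.
- case=> _ spo; split.
  + apply: (@fwd V A B G (fun P => val (H (restrict_prof P C)))) => //.
    by move=> P; apply: nB; exact: valP.
  + apply: (@fwd V A C H (fun P => val (G (restrict_prof P B)))).
      by move=> P; apply: nC; exact: valP.
    move=> P i Pi' b b'; rewrite /consular in spo.
    have sw : forall (a c : A), [set a; c] = [set c; a].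
      by move=> a c; apply/setP => x; rewrite !in_set2 orbC.
    move=> h1 h2; apply: (spo P i Pi').
      by rewrite /consular sw.
    by rewrite /consular sw.
- case=> sG sH; split.
  + move=> P i Pi' w w' [wF wW] [w'F w'W].
    have hg := spG sG P i Pi'; have hh := spG sH P i Pi'.
    move: wF w'F w'W wW; rewrite /consular !in_set2.
    move=> /orP[/eqP->|/eqP->] /orP[/eqP->|/eqP->] w'W wW //.
    * apply: pref_trans hg _; apply: w'W; by rewrite in_set2 eqxx ?orbT.
    * apply: pref_trans hh _; apply: w'W; by rewrite in_set2 eqxx ?orbT.
  + move=> P i Pi' b b' [bF bW] [b'F b'W].
    have hg := spG sG P i Pi'; have hh := spG sH P i Pi'.
    move: b'F; rewrite /consular !in_set2 => /orP[/eqP->|/eqP->].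
    * apply: pref_trans hg; apply: bW; by rewrite in_set2 eqxx ?orbT.
    * apply: pref_trans hh; apply: bW; by rewrite in_set2 eqxx ?orbT.
Qed.
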